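(* Let $c>0$ and $C>0$ be constants, $\theta=c/n$, $p\le Cn\log n$, and let $X$ be an $n\times p$ Bernoulli–subgaussian random matrix with parameter $\theta$. Then the probability that $X$ has three distinct columns that are aligned is $o(1)$ as $n\to\infty$.
   Context: An $n\times p$ Bernoulli–subgaussian random matrix with parameter $\theta\in(0,1]$ is a matrix $X=(x_{ij})$ with iid entries $x_{ij}=\chi_{ij}\xi_{ij}$, where the $\chi_{ij}$ are iid indicator random variables with $\mathbb{P}(\chi_{ij}=1)=\theta$, the $\xi_{ij}$ are iid random variables independent of the $\chi$'s, with mean $0$, variance at most $1$, $\mathbb{E}|\xi_{ij}|\in[1/10,1]$, and $\mathbb{P}(|\xi_{ij}|\ge t)\le 2\exp(-t^2/2)$ for all $t>0$. A set of columns is called aligned if each of them has more than one nonzero entry and their nonzero entries occur in exactly the same positions (identical supports). *)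

(* Defs.v *)
From mathcomp Require Import all_boot.
From Stdlib Require Import Reals.
Set Implicit Arguments. Unset Strict Implicit. Unset Printing Implicit Defensive.

Definition pattern (n p : nat) := {ffun 'I_n * 'I_p -> bool}.

Definition col_support n p (M : pattern n p) (j : 'I_p) : {set 'I_n} :=
  [set i | M (i, j)].

Definition three_aligned n p (M : pattern n p) : bool :=
  [exists j1 : 'I_p, exists j2 : 'I_p, exists j3 : 'I_p,
    [&& j1 != j2, j1 != j3, j2 != j3,
        1 < #|col_support M j1|, 1 < #|col_support M j2|, 1 < #|col_support M j3|,
        col_support M j1 == col_support M j2 &
        col_support M j1 == col_support M j3]].

(* Entrywise conjunction: x_ij = chi_ij * xi_ij is nonzero iff chi_ij = 1 and xi_ij <> 0. *)
Definition pand n p (A B : pattern n p) : pattern n p := [ffun k => A k && B k].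

Definition sumR (T : Type) (s : seq T) (f : T -> R) : R :=
  foldr (fun x acc => (f x + acc)%R) 0%R s.
Definition prodR (T : Type) (s : seq T) (f : T -> R) : R :=
  foldr (fun x acc => (f x * acc)%R) 1%R s.

Definition bern (t : R) (b : bool) : R := if b then t else (1 - t)%R.

(* Probability that the n x p Bernoulli-subgaussian matrix X with parameter theta
   has three distinct aligned columns, where q = P(xi_ij <> 0).  The event depends
   on X only through the indicators chi_ij (iid Bernoulli(theta)) and
   [xi_ij <> 0] (iid Bernoulli(q), independent of the chi's). *)
Definition prob_three_aligned (n p : nat) (theta q : R) : R :=
  sumR (enum [set: pattern n p]) (fun A =>
  sumR (enum [set: pattern n p]) (fun B =>
    (prodR (enum [set: 'I_n * 'I_p]) (fun k => bern theta (A k) * bern q (B k))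
     * (if three_aligned (pand A B) then 1 else 0))%R)).

(* Main.v *)
Require Import Defs.
From mathcomp Require Import all_boot all_order all_algebra.
From mathcomp Require Import Rstruct.
Import Order.TTheory.
From Stdlib Require Import Reals Lra.
Import GRing.Theory Num.Theory.

Section Key.
Local Open Scope ring_scope.

Lemma sumR_big (T : Type) (s : seq T) (f : T -> R) : sumR s f = \sum_(x <- s) f x.
Proof. elim: s => [|x s IH]; first by rewrite big_nil. by rewrite big_cons -IH. Qed.

Lemma prodR_big (T : Type) (s : seq T) (f : T -> R) : prodR s f = \prod_(x <- s) f x.
Proof. elim: s => [|x s IH]; first by rewrite big_nil. by rewrite big_cons -IH. Qed.

Lemma sum_enumT (T : finType) (f : T -> R) : \sum_(x <- enum [set: T]) f x = \sum_x f x.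
Proof. by rewrite big_enum; apply: eq_bigl => x; rewrite in_setT. Qed.

Lemma prod_enumT (T : finType) (f : T -> R) : \prod_(x <- enum [set: T]) f x = \prod_x f x.
Proof. by rewrite big_enum; apply: eq_bigl => x; rewrite in_setT. Qed.

Lemma bern_ge0 t b : 0 <= t <= 1 -> 0 <= bern t b.
Proof. by case/andP=> h0 h1; case: b => //=; rewrite subr_ge0. Qed.

Lemma bern_sum t (b : bool) : \sum_(x : bool) bern t x * (if b then (x%:R) else 1) = if b then t else 1.
Proof. rewrite big_bool /=; case: b; rewrite ?mulr1 ?mulr0 ?addr0 //. by rewrite addrC subrK. Qed.

Lemma sum_prod_ffun (I : finType) (h : I -> bool -> R) :
  \sum_(A : {ffun I -> bool}) \prod_k h k (A k) = \prod_k \sum_b h k b.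
Proof. by rewrite bigA_distr_bigA. Qed.

Lemma expect_K n p (t q : R) (K : {set 'I_n * 'I_p}) :
  \sum_(A : pattern n p) \sum_(B : pattern n p)
    ((\prod_k (bern t (A k) * bern q (B k))) * \prod_(k in K) ((A k)%:R * (B k)%:R))
  = (t * q) ^+ #|K|.
Proof.
have E : forall A B : pattern n p,
    (\prod_k (bern t (A k) * bern q (B k))) * \prod_(k in K) ((A k)%:R * (B k)%:R)
  = (\prod_k (bern t (A k) * (if k \in K then (A k)%:R else 1)))
    * (\prod_k (bern q (B k) * (if k \in K then (B k)%:R else 1))).
  move=> A B; rewrite -!big_split /= [X in _ * X = _]big_mkcond -big_split /=.
  apply: eq_bigr => k _; case: (k \in K); rewrite ?mulr1 //.
  by rewrite mulrACA.
under eq_bigr => A _ do under eq_bigr => B _ do rewrite E.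
under eq_bigr => A _ do rewrite -mulr_sumr.
rewrite -mulr_suml (sum_prod_ffun _ (fun k b => bern t b * (if k \in K then b%:R else 1))).
rewrite (sum_prod_ffun _ (fun k b => bern q b * (if k \in K then b%:R else 1))).
under eq_bigr => k _ do rewrite bern_sum.
under [X in _ * X = _]eq_bigr => k _ do rewrite bern_sum.
rewrite -!big_mkcond /= !prodr_const exprMn //.
Qed.

Definition T5 n p := (('I_p * 'I_p * 'I_p) * ('I_n * 'I_n))%type.
Definition Dx {n p} (x : T5 n p) : bool :=
  [&& x.1.1.1 != x.1.1.2, x.1.1.1 != x.1.2, x.1.1.2 != x.1.2 & x.2.1 != x.2.2].
Definition Kx {n p} (x : T5 n p) : {set 'I_n * 'I_p} :=
  setX [set x.2.1; x.2.2] [set x.1.1.1; x.1.1.2; x.1.2].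

Lemma card_Kx n p (x : T5 n p) : Dx x -> #|Kx x| = 6%N.
Proof.
case: x => [[[j1 j2] j3] [i1 i2]]; rewrite /Dx /Kx /= => /and4P[h12 h13 h23 hi].
rewrite cardsX cards2 hi.
have -> : [set j1; j2; j3] = j1 |: [set j2; j3] by rewrite setUA.
rewrite cardsU1 cards2 in_set2 h23 negb_or h12 h13 //.
Qed.

Lemma indic_le {n p} (M : pattern n p) :
  (if three_aligned M then 1 else 0) <=
  \sum_(x : T5 n p | Dx x) \prod_(k in Kx x) ((M k)%:R : R).
Proof.
case: ifP => [|_]; last first.
  by apply: sumr_ge0 => x _; apply: prodr_ge0 => k _; apply: ler0n.
case/existsP=> j1 /existsP[j2 /existsP[j3 /and5P[h12 h13 h23 c1 /and4P[c2 c3 /eqP e12 /eqP e13]]]].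
have /card_gt1P [i1 [i2 [Hi1 Hi2 hi]]] := c1.
pose x : T5 n p := ((j1, j2, j3), (i1, i2)).
have Dxx : Dx x by rewrite /Dx /= h12 h13 h23 hi.
rewrite (bigD1 x) //=.
have -> : \prod_(k in Kx x) ((M k)%:R : R) = 1.
  apply: big1 => [[i j]] /setXP[hi' hj'].
  have Ej : col_support M j = col_support M j1.
    by move: hj'; rewrite /= !inE -orbA => /or3P[]/eqP->.
  have : i \in col_support M j by rewrite Ej; case/set2P: hi' => ->.
  by rewrite inE => ->.
rewrite lerDl; apply: sumr_ge0 => y _; apply: prodr_ge0 => k _; apply: ler0n.
Qed.

Lemma key n p (t q : R) : 0 <= t <= 1 -> 0 <= q <= 1 ->
  prob_three_aligned n p t q <= (p * p * p * (n * n))%nat%:R * (t * q) ^+ 6.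
Proof.
move=> ht hq.
rewrite /prob_three_aligned sumR_big sum_enumT.
under eq_bigr => A _ do rewrite sumR_big sum_enumT.
under eq_bigr => A _ do under eq_bigr => B _ do rewrite prodR_big prod_enumT.
set w := fun (A B : pattern n p) => \prod_k (bern t (A k) * bern q (B k)).
apply: (@le_trans _ _ (\sum_(A : pattern n p) \sum_(B : pattern n p) w A B *
   \sum_(x : T5 n p | Dx x) \prod_(k in Kx x) ((A k)%:R * (B k)%:R))).
  apply: ler_sum => A _; apply: ler_sum => B _; apply: ler_wpM2l.
    by apply: prodr_ge0 => k _; apply: mulr_ge0; apply: bern_ge0.
  have h := indic_le (pand A B).
  have e : \sum_(x : T5 n p | Dx x) \prod_(k in Kx x) (((pand A B) k)%:R : R) =
           \sum_(x : T5 n p | Dx x) \prod_(k in Kx x) ((A k)%:R * (B k)%:R).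
    apply/eq_bigr => x _.
    by apply: eq_bigr => k _; rewrite ffunE; case: (A k); case: (B k); rewrite /= ?mulr1 ?mulr0 ?mul0r.
  rewrite -e; exact: h.
under eq_bigr => A _ do under eq_bigr => B _ do rewrite mulr_sumr.
under eq_bigr => A _ do rewrite exchange_big /=.
rewrite exchange_big /=.
have -> : \sum_(x : T5 n p | Dx x) \sum_(A : pattern n p) \sum_(B : pattern n p)
     w A B * \prod_(k in Kx x) ((A k)%:R * (B k)%:R)
   = \sum_(x : T5 n p | Dx x) (t * q) ^+ 6.
  by apply: eq_bigr => x Dxx; rewrite expect_K card_Kx.
have hc : 0 <= (t * q) ^+ 6.
  by apply: exprn_ge0; apply: mulr_ge0; [case/andP: ht | case/andP: hq].
apply: (@le_trans _ _ (\sum_(x : T5 n p) (t * q) ^+ 6)).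
  rewrite [X in _ <= X](bigID Dx) /= lerDl; apply: sumr_ge0 => x _; exact: hc.
rewrite sumr_const -[X in X <= _]mulr_natl; apply: ler_wpM2r => //.
rewrite ler_nat.
by rewrite !card_prod !card_ord.
Qed.

End Key.

Section Fin.
Local Open Scope R_scope.
Lemma cube_le a b : 0 <= a -> a <= b -> a*a*a <= b*b*b.
Proof. intros; assert (a*a <= b*b) by nra; nra. Qed.

Lemma ln_lt_self s : 0 < s -> ln s < s.
Proof.
intros hs. pose proof (exp_ineq1 s ltac:(lra)).
pose proof (ln_increasing s (exp s) hs ltac:(lra)) as h. rewrite ln_exp in h. exact h.
Qed.

Lemma final_bound (c C eps x P tq : R) :
  0 < c -> 0 < C -> 0 < eps -> 1 <= x ->
  (64 * (C*C*C) * (c*c*c*c*c*c) / eps) ^ 4 < x ->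
  0 <= P -> P <= C * x * ln x ->
  0 <= tq -> tq <= c / x ->
  P*P*P*(x*x) * tq^6 < eps.
Proof.
intros hc hC he hx1 hK hP0 hP htq0 htq.
set K := 64 * (C*C*C) * (c*c*c*c*c*c) / eps in hK.
assert (hK0 : 0 < K) by (unfold K; apply Rdiv_lt_0_compat; [|lra]; repeat apply Rmult_lt_0_compat; lra).
set s := sqrt (sqrt x).
assert (hx0 : 0 < x) by lra.
assert (hs0 : 0 < s) by (apply sqrt_lt_R0, sqrt_lt_R0; lra).
assert (hs4 : s*s*(s*s) = x).
{ unfold s. rewrite !sqrt_sqrt; try lra. apply sqrt_pos. }
assert (hL : ln x = 4 * ln s).
{ rewrite <- hs4. rewrite !ln_mult; try nra; lra. }
assert (hL0 : 0 <= ln x).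
{ destruct (Req_dec x 1) as [e|ne]. rewrite e ln_1; lra. left. rewrite <- ln_1. apply ln_increasing; lra. }
assert (hLs : ln x <= 4 * s) by (pose proof (ln_lt_self s hs0); lra).
assert (hsK : K < s).
{ destruct (Rlt_or_le K s) as [h|h]; auto.
  assert (s*s <= K*K) by nra. assert (s*s*(s*s) <= K*K*(K*K)) by nra.
  rewrite hs4 in H0. simpl in hK. nra. }
set t := c / x.
assert (ht0 : 0 <= t) by (unfold t; apply Rlt_le, Rdiv_lt_0_compat; lra).
assert (htx : t * x = c) by (unfold t; field; lra).
assert (h6 : tq^6 <= t^6) by (apply pow_incr; split; [lra|exact htq]).
assert (hP3 : P*P*P <= (C*x*ln x)*(C*x*ln x)*(C*x*ln x)) by (apply cube_le; lra).
assert (hL3 : ln x * ln x * ln x <= (4*s)*(4*s)*(4*s)) by (apply cube_le; lra).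
assert (step1 : P*P*P*(x*x)*tq^6 <= (C*x*ln x)*(C*x*ln x)*(C*x*ln x)*(x*x)*t^6).
{ apply Rmult_le_compat.
  - apply Rmult_le_pos; [repeat apply Rmult_le_pos; lra | nra].
  - apply pow_le; lra.
  - apply Rmult_le_compat_r; nra.
  - exact h6. }
assert (e2 : (C*x*ln x)*(C*x*ln x)*(C*x*ln x)*(x*x)*t^6
             = (C*C*C)*(c*c*c*c*c*c) * (ln x * ln x * ln x) / x).
{ rewrite <- htx. simpl. field. lra. }
assert (step2 : (C*C*C)*(c*c*c*c*c*c) * (ln x * ln x * ln x) / x
               <= (C*C*C)*(c*c*c*c*c*c) * ((4*s)*(4*s)*(4*s)) / x).
{ unfold Rdiv. apply Rmult_le_compat_r. left; apply Rinv_0_lt_compat; lra.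
  apply Rmult_le_compat_l; auto. apply Rmult_le_pos; repeat apply Rmult_le_pos; lra. }
assert (e3 : (C*C*C)*(c*c*c*c*c*c) * ((4*s)*(4*s)*(4*s)) / x = K * eps / s).
{ rewrite <- hs4. unfold K. field. lra. }
assert (step3 : K * eps / s < eps).
{ apply (Rmult_lt_reg_r s); auto. replace (K*eps/s*s) with (K*eps) by (field; lra). nra. }
lra.
Qed.
End Fin.

Theorem mainTheorem10 (c C : R) (hc : (0 < c)%R) (hC : (0 < C)%R) :
  forall eps : R, (0 < eps)%R ->
  exists N : nat, forall (n p : nat) (q : R),
    (N <= n)%nat ->
    (INR p <= C * INR n * ln (INR n))%R ->
    (0 <= q <= 1)%R ->
    (prob_three_aligned n p (c / INR n) q < eps)%R.
Proof.
intros eps heps.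
set K := (64 * (C*C*C) * (c*c*c*c*c*c) / eps)%R.
destruct (INR_archimed 1 (K^4 + c + 1) Rlt_0_1) as [N HN].
exists N => n p q hN hp hq.
assert (hx : (INR N <= INR n)%R) by (apply le_INR; exact (elimT ssrnat.leP hN)).
assert (hx1 : (K^4 + c + 1 < INR n)%R) by lra.
assert (hK0 : (0 <= K)%R).
{ unfold K. apply Rlt_le, Rdiv_lt_0_compat; [|lra]; repeat apply Rmult_lt_0_compat; lra. }
assert (hK4 : (0 <= K^4)%R) by (apply pow_le; lra).
assert (hx1' : ((64 * (C*C*C) * (c*c*c*c*c*c) / eps)^4 < INR n)%R) by exact (Rle_lt_trans _ _ _ (Rle_refl _) (Rlt_le_trans _ _ _ (ltac:(lra) : (K^4 < K^4 + c + 1)%R) (Rlt_le _ _ hx1))).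
assert (hxpos : (0 < INR n)%R) by lra.
assert (ht0 : (0 <= c / INR n)%R) by (apply Rlt_le, Rdiv_lt_0_compat; lra).
assert (ht1 : (c / INR n <= 1)%R).
{ apply (Rmult_le_reg_r (INR n)); auto. replace (c / INR n * INR n)%R with c by (field; lra). lra. }
assert (hq0 : (0 <= q)%R) by lra.
assert (hq1 : (q <= 1)%R) by lra.
have Hkey := key n p (c / INR n) q (introT andP (conj (introT RleP ht0) (introT RleP ht1)))
   (introT andP (conj (introT RleP hq0) (introT RleP hq1))).
rewrite !natrM -!INRE -RpowE in Hkey; move/RleP in Hkey.
eapply Rle_lt_trans; [exact Hkey|].
apply (final_bound c C eps (INR n) (INR p)); try lra.
- apply pos_INR.
- apply Rmult_le_pos; lra.
- apply (Rle_trans _ (c / INR n * 1)); [apply Rmult_le_compat_l; lra | lra].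
Qed.
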